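(* For packed words $f,g$ of length $n$, write $f\leq g$ if (1) for all $i,j\in[n]$, ($i\geq j$ and $f(i)\leq f(j)$) implies $g(i)\leq g(j)$; and (2) for all $i,j\in[n]$, $g(i)=g(j)$ implies $f(i)=f(j)$. Then $\leq$ is a partial order on the set $PW(n)$ of packed words of length $n$. Moreover, for every $f\in PW(n)$, $$\phi(P_f)=\sum_{g\in PW(n),\ f\leq g} g,$$ i.e. the set of linear extensions of $P_f$ is $\{g\in PW(n)\mid f\leq g\}$.
   Context: A packed word of length $n$ is a word $w(1)\cdots w(n)$ of positive integers whose set of letters is $\{1,\dots,k\}$ for some $k$; equivalently a surjection $[n]\to[k]$. A weak plane poset is a finite set with two partial orders $\leq_1,\leq_2$ such that $x\leq_1 y$ and $x\leq_2 y$ imply $x=y$, and such that $x\preceq y\iff(x\leq_1 y$ or $x\leq_2 y)$ is a total quasi-order; write $x\equiv y$ if $x\preceq y$ and $y\preceq x$. For a packed word $w$ of length $n$, $P_w=([n],\leq_1,\leq_2)$ with $i\leq_1 j\iff(i\geq j$ and $w(i)\leq w(j))$ and $i\leq_2 j\iff(i\leq j$ and $w(i)\leq w(j))$. For a weak plane poset $P$ with underlying set $[n]$ such that the total order $x\ll y\iff(y\leq_1 x$ or $x\leq_2 y)$ is the natural order of $[n]$ (as is the case for $P_w$), a linear extension of $P$ is a surjection $f:[n]\to[k]$ (seen as the packed word $f(1)\cdots f(n)$) such that (a) $i\leq_1 j\Rightarrow f(i)\leq f(j)$ and (b) $f(i)=f(j)\Rightarrow i\equiv j$. Let $\mathbf{WQSym}$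 be the vector space with basis all packed words. The linear map $\phi$ from the span of isomorphism classes of weak plane posets to $\mathbf{WQSym}$ sends $P$ to the sum of its linear extensions. *)

(* Defs.v *)
From mathcomp Require Import all_boot.
Set Implicit Arguments. Unset Strict Implicit. Unset Printing Implicit Defensive.

(* A word of length n: positions [n] are encoded as 'I_n (position i+1 ~ ordinal i),
   letters are natural numbers. *)
Definition word (n : nat) := {ffun 'I_n -> nat}.

Definition packed (n : nat) (w : word n) : Prop :=
  exists k : nat, forall m : nat, (exists i : 'I_n, w i = m) <-> (1 <= m <= k).

Definition pw_le (n : nat) (f g : word n) : Prop :=
  (forall i j : 'I_n, (j <= i) && (f i <= f j) -> g i <= g j) /\
  (forall i j : 'I_n, g i = g j -> f i = f j).

Record biorder (n : nat) := BiOrder { le1 : rel 'I_n; le2 : rel 'I_n }.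

Definition is_partial_order (n : nat) (r : rel 'I_n) : Prop :=
  reflexive r /\ antisymmetric r /\ transitive r.

Definition bprec (n : nat) (P : biorder n) : rel 'I_n :=
  fun x y => le1 P x y || le2 P x y.

Definition bequiv (n : nat) (P : biorder n) : rel 'I_n :=
  fun x y => bprec P x y && bprec P y x.

Definition weak_plane_poset (n : nat) (P : biorder n) : Prop :=
  is_partial_order (le1 P) /\ is_partial_order (le2 P) /\
  (forall x y, le1 P x y -> le2 P x y -> x = y) /\
  reflexive (bprec P) /\ transitive (bprec P) /\
  (forall x y, bprec P x y || bprec P y x).

Definition natural_ll (n : nat) (P : biorder n) : Prop :=
  forall x y : 'I_n, (le1 P y x || le2 P x y) = (x <= y).

Definition linear_extension (n : nat) (P : biorder n) (f : word n) : Prop :=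
  packed f /\
  (forall i j, le1 P i j -> f i <= f j) /\
  (forall i j, f i = f j -> bequiv P i j).

Definition P_of (n : nat) (w : word n) : biorder n :=
  BiOrder (fun i j : 'I_n => (j <= i) && (w i <= w j))
          (fun i j : 'I_n => (i <= j) && (w i <= w j)).

(* Main.v *)
Require Import Defs.
From mathcomp Require Import all_boot.
From mathcomp Require Import zify.

Lemma packed_bounds n (f : word n) : packed f ->
  exists k, (forall i, 1 <= f i <= k) /\ (forall m, 1 <= m <= k -> exists i, f i = m).
Proof.
case=> k H; exists k; split.
  by move=> i; apply/H; exists i.
by move=> m /H.
Qed.

Lemma iso_eq n (f g : word n) : packed f -> packed g ->
  (forall i j, (f i <= f j) = (g i <= g j)) -> f = g.
Proof.
move=> /packed_bounds[kf [Bf Sf]] /packed_bounds[kg [Bg Sg]] E.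
have key: forall m, (forall i, f i = m -> g i = m) /\ (forall i, g i = m -> f i = m).
  elim/ltn_ind=> m IH; split=> i Hi.
  - case: (ltngtP (g i) m) => // H.
    + have := (IH _ H).2 i erefl. lia.
    + have [j Hj]: exists j, g j = m.
        by apply: Sg; have := Bg i; have := Bf i; lia.
      have hlt : f j < f i.
        have := E i j; case: (leqP (f i) (f j)); case: (leqP (g i) (g j)) => //; lia.
      have := (IH (f j) ltac:(lia)).1 j erefl. lia.
  - case: (ltngtP (f i) m) => // H.
    + have := (IH _ H).1 i erefl. lia.
    + have [j Hj]: exists j, f j = m.
        by apply: Sf; have := Bf i; have := Bg i; lia.
      have hlt : g j < g i.
        have := E i j; case: (leqP (f i) (f j)); case: (leqP (g i) (g j)) => //; lia.
      have := (IH (g j) ltac:(lia)).2 j erefl. lia.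
apply/ffunP=> i. exact: esym ((key (f i)).1 i erefl).
Qed.

Lemma bequiv_P n (f : word n) i j : bequiv (P_of f) i j = (f i == f j).
Proof.
rewrite /bequiv /bprec /=.
case: (leqP (j : nat) i) => Hij /=; case: (leqP (f i) (f j)) => Hf /=;
  case: (leqP (f j) (f i)) => Hf' /=; try lia;
  apply/esym/eqP; lia.
Qed.

Theorem mainTheorem4 (n : nat) :
  (* <= is a partial order on PW(n) *)
  (forall f : word n, packed f -> pw_le f f) /\
  (forall f g : word n, packed f -> packed g -> pw_le f g -> pw_le g f -> f = g) /\
  (forall f g h : word n, packed f -> packed g -> packed h ->
      pw_le f g -> pw_le g h -> pw_le f h) /\
  (* the linear extensions of P_f are exactly the packed g with f <= g *)
  (forall f : word n, packed f ->
     forall g : word n, linear_extension (P_of f) g <-> (packed g /\ pw_le f g)).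
Proof.
split; [|split; [|split]].
- move=> f _; split; first by move=> i j /andP[].
  by [].
- move=> f g Pf Pg [F1 F2] [G1 G2]; apply: iso_eq => // i j.
  have L: forall a b : 'I_n, b <= a -> (f a <= f b) = (g a <= g b).
    move=> a b ab; apply/idP/idP => H.
    + by apply: F1; rewrite ab H.
    + by apply: G1; rewrite ab H.
  case: (leqP (j : nat) i) => Hij; first exact: L.
  have := L j i (ltnW Hij).
  have e1 := F2 i j; have e2 := G2 i j.
  case: (leqP (f i) (f j)); case: (leqP (g i) (g j)) => // h1 h2;
  case: (leqP (f j) (f i)); case: (leqP (g j) (g i)) => //= h3 h4;
  try (move=> e; have := e2 ltac:(lia); lia);
  try (move=> e; have := e1 ltac:(lia); lia).
- move=> f g h _ _ _ [F1 F2] [G1 G2]; split.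
  + move=> i j /andP[ij fij]; apply: G1; rewrite ij /=; apply: F1; by rewrite ij fij.
  + by move=> i j /G2 /F2.
- move=> f _ g; split.
  + case=> Pg [H1 H2]; split => //; split; first exact: H1.
    by move=> i j /H2; rewrite bequiv_P => /eqP.
  + case=> Pg [H1 H2]; split => //; split; first exact: H1.
    by move=> i j /H2 /eqP; rewrite bequiv_P.
Qed.
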